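(* Let $f:[0,\infty)\rightarrow\mathbb{R}$ be a continuous function which is $3$-convex, nondecreasing and concave. Then \[ f(|A|)+f(|B|)+f(|C|)+f(|A+B+C|)\geq f(|A+B|)+f(|B+C|)+f(|C+A|)+f(0)I_n \] in the Löwner order, whenever $A,B,C$ are real symmetric $n\times n$ matrices that commute with each other.
   Context: For a real symmetric matrix $A$, $|A|=(A^2)^{1/2}$ is its modulus (a positive semidefinite matrix), and for a positive semidefinite matrix $M=U\operatorname{diag}(\lambda_1,\dots,\lambda_n)U^{T}$ with $U$ orthogonal, $f(M)=U\operatorname{diag}(f(\lambda_1),\dots,f(\lambda_n))U^{T}$. $I_n$ is the $n\times n$ identity matrix. The Löwner order: $X\leq Y$ iff $\langle X\mathbf{x},\mathbf{x}\rangle\leq\langle Y\mathbf{x},\mathbf{x}\rangle$ for all $\mathbf{x}\in\mathbb{R}^n$. A real function $f$ on an interval is $3$-convex if for all $x_0<x_1<x_2<x_3$ in the interval, $\sum_{j=0}^{3}\frac{f(x_j)}{\prod_{k\neq j}(x_j-x_k)}\geq0$. *)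

(* Defs.v *)
From HB Require Import structures.
From mathcomp Require Import all_boot all_order all_algebra.
From mathcomp Require Import all_classical all_reals all_analysis.
Set Implicit Arguments. Unset Strict Implicit. Unset Printing Implicit Defensive.
Import Order.TTheory GRing.Theory Num.Theory.
Local Open Scope classical_set_scope.
Local Open Scope ring_scope.

Section Defs.
Variable R : realType.

Definition orth_diagonalizes n (M U : 'M[R]_n) (d : 'rV[R]_n) : Prop :=
  U *m U^T = 1%:M /\ M = U *m diag_mx d *m U^T.

(* f(M) := U diag(f(d_1),...,f(d_n)) U^T for a chosen orthogonal
   diagonalization M = U diag(d) U^T (junk value 0 if none exists). *)
Definition mxfun n (f : R -> R) (M : 'M[R]_n) : 'M[R]_n :=
  let Ud := xget (0, 0) [set Ud : 'M[R]_n * 'rV[R]_n |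
                         orth_diagonalizes M Ud.1 Ud.2] in
  Ud.1 *m diag_mx (map_mx f Ud.2) *m Ud.1^T.

Definition mxabs n (A : 'M[R]_n) : 'M[R]_n := mxfun (@Num.sqrt R) (A *m A).

Definition loewner_le n (X Y : 'M[R]_n) : Prop :=
  forall x : 'cV[R]_n, (x^T *m X *m x) 0 0 <= (x^T *m Y *m x) 0 0.

Definition three_convex_nonneg (f : R -> R) : Prop :=
  forall x0 x1 x2 x3 : R, 0 <= x0 -> x0 < x1 -> x1 < x2 -> x2 < x3 ->
    0 <= f x0 / ((x0 - x1) * (x0 - x2) * (x0 - x3))
       + f x1 / ((x1 - x0) * (x1 - x2) * (x1 - x3))
       + f x2 / ((x2 - x0) * (x2 - x1) * (x2 - x3))
       + f x3 / ((x3 - x0) * (x3 - x1) * (x3 - x2)).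

Definition nondecreasing_nonneg (f : R -> R) : Prop :=
  forall x y : R, 0 <= x -> x <= y -> f x <= f y.

Definition concave_nonneg (f : R -> R) : Prop :=
  forall (x y t : R), 0 <= x -> 0 <= y -> 0 <= t -> t <= 1 ->
    t * f x + (1 - t) * f y <= f (t * x + (1 - t) * y).
End Defs.

(* Main.v *)
Require Import Defs.
From HB Require Import structures.
From mathcomp Require Import all_boot all_order all_algebra.
From mathcomp Require Import all_classical all_reals all_analysis.
From mathcomp Require Import ring lra complex.
Import Order.TTheory GRing.Theory Num.Theory.
Import numFieldNormedType.Exports.
Local Open Scope classical_set_scope.
Local Open Scope ring_scope.

Definition dd3 {R : realType} (f : R -> R) (x y z : R) :=
  f x / ((x - y) * (x - z)) + f y / ((y - x) * (y - z)) + f z / ((z - x) * (z - y)).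
Definition dd4 {R : realType} (f : R -> R) (x0 x1 x2 x3 : R) :=
  f x0 / ((x0 - x1) * (x0 - x2) * (x0 - x3))
       + f x1 / ((x1 - x0) * (x1 - x2) * (x1 - x3))
       + f x2 / ((x2 - x0) * (x2 - x1) * (x2 - x3))
       + f x3 / ((x3 - x0) * (x3 - x1) * (x3 - x2)).

Lemma dd3_step {R : realType} (f : R -> R) (x y z w : R) :
  x != y -> x != z -> x != w -> y != z -> y != w -> z != w ->
  dd3 f x y w - dd3 f x y z = (w - z) * dd4 f x y z w.
Proof.
move=> xy xz xw yz yw zw; rewrite /dd3 /dd4.
have nz : forall a b : R, a != b -> a - b != 0 by move=> a b; rewrite subr_eq0.
have nz' : forall a b : R, a != b -> b - a != 0 by move=> a b ab; rewrite subr_eq0 eq_sym.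
field; by rewrite !subr_eq0 (eq_sym w z) (eq_sym w y) (eq_sym w x) (eq_sym z y) (eq_sym z x) (eq_sym y x) xy xz xw yz yw zw.
Qed.
Lemma h3dd4 {R : realType} (f : R -> R) : three_convex_nonneg f ->
  forall x0 x1 x2 x3, 0 <= x0 -> x0 < x1 -> x1 < x2 -> x2 < x3 -> 0 <= dd4 f x0 x1 x2 x3.
Proof. by move=> h x0 x1 x2 x3 *; apply: h. Qed.

Lemma mono3 {R : realType} (f : R -> R) : three_convex_nonneg f ->
  forall x y z c : R, 0 <= x -> x < y -> y < z -> 0 < c ->
  dd3 f x y z <= dd3 f (x + c) (y + c) (z + c).
Proof.
move=> h x y z c x0 xy yz c0.
have ne : forall a b : R, a < b -> a != b by move=> a b /lt_eqF ->.
have ne' : forall a b : R, a < b -> b != a by move=> a b /gt_eqF ->.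
have e1 := @dd3_step _ f x y z (z + c).
have e2 := @dd3_step _ f x (z + c) y (y + c).
have e3 := @dd3_step _ f (z + c) (y + c) x (x + c).
have s1 : dd3 f x (z + c) (y + c) = dd3 f x (y + c) (z + c).
  by rewrite /dd3; lra.
have s2 : dd3 f x (z + c) y = dd3 f x y (z + c) by rewrite /dd3; lra.
have s3 : dd3 f (z + c) (y + c) (x + c) = dd3 f (x + c) (y + c) (z + c) by rewrite /dd3; lra.
have s4 : dd3 f (z + c) (y + c) x = dd3 f x (y + c) (z + c) by rewrite /dd3; lra.
have p1 : 0 <= dd4 f x y z (z + c) by apply: h3dd4 => //; lra.
have p2 : 0 <= dd4 f x y (y + c) (z + c) by apply: h3dd4 => //; lra.
have p3 : 0 <= dd4 f x (x + c) (y + c) (z + c) by apply: h3dd4 => //; lra.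
have q2 : dd4 f x (z + c) y (y + c) = dd4 f x y (y + c) (z + c) by rewrite /dd4; lra.
have q3 : dd4 f (z + c) (y + c) x (x + c) = dd4 f x (x + c) (y + c) (z + c) by rewrite /dd4; lra.
rewrite s1 s2 q2 in e2; rewrite s3 s4 q3 in e3.
have := e1 (ne _ _ xy) (ne _ _ (lt_trans xy yz)) (ne x (z + c) ltac:(lra)) (ne _ _ yz)
  (ne y (z + c) ltac:(lra)) (ne z (z + c) ltac:(lra)).
have := e2 (ne x (z + c) ltac:(lra)) (ne _ _ xy) (ne x (y + c) ltac:(lra)) (ne' y (z + c) ltac:(lra))
  (ne' (y + c) (z + c) ltac:(lra)) (ne y (y + c) ltac:(lra)).
have := e3 (ne' (y + c) (z + c) ltac:(lra)) (ne' x (z + c) ltac:(lra)) (ne' (x + c) (z + c) ltac:(lra))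
  (ne' x (y + c) ltac:(lra)) (ne' (x + c) (y + c) ltac:(lra)) (ne x (x + c) ltac:(lra)).
move=> E3 E2 E1.
have : 0 <= c * dd4 f x y z (z + c) + c * dd4 f x y (y + c) (z + c) + c * dd4 f x (x + c) (y + c) (z + c).
  by rewrite !addr_ge0 ?mulr_ge0 // ltW.
have r1 : z + c - z = c by ring. have r2 : y + c - y = c by ring. have r3 : x + c - x = c by ring.
rewrite r1 in E1; rewrite r2 in E2; rewrite r3 in E3.
lra.
Qed.
Lemma conv_aux {R : realType} (f : R -> R) : three_convex_nonneg f ->
  forall a b c : R, 0 < a -> 0 < b -> 0 < c ->
  0 <= b * (f c - f 0) - (a + b) * (f (a + c) - f a) + a * (f (a + b + c) - f (a + b)).
Proof.
move=> h a b c a0 b0 c0.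
have m := @mono3 _ f h 0 a (a + b) c (lexx _) a0 ltac:(lra) c0.
have k0 : 0 < a * b * (a + b) by rewrite !mulr_gt0 // addr_gt0.
have : 0 <= a * b * (a + b) * (dd3 f (0 + c) (a + c) (a + b + c) - dd3 f 0 a (a + b)).
  by apply: mulr_ge0; [exact: ltW | rewrite subr_ge0].
suff -> : a * b * (a + b) * (dd3 f (0 + c) (a + c) (a + b + c) - dd3 f 0 a (a + b)) =
  b * (f c - f 0) - (a + b) * (f (a + c) - f a) + a * (f (a + b + c) - f (a + b)) by [].
rewrite /dd3 add0r.
have an : a != 0 by rewrite gt_eqF.
have bn : b != 0 by rewrite gt_eqF.
have abn : a + b != 0 by rewrite gt_eqF // addr_gt0.
field.
have e1 : a + b - a = b by ring.
have e2 : a - (a + b) = - b by ring.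
have e3 : c - (a + b + c) = - (a + b) by ring.
have e4 : c - (a + c) = - a by ring.
by rewrite e1 e2 e3 e4 !oppr_eq0 an bn abn.
Qed.
Lemma Dpos {R : realType} (f : R -> R) : three_convex_nonneg f ->
  forall a b c : R, 0 <= a -> 0 <= b -> 0 <= c ->
  0 <= f (a + b + c) - f (a + b) - f (b + c) - f (c + a) + f a + f b + f c - f 0.
Proof.
move=> h a b c; rewrite le_eqVlt => /orP[/eqP<- _ _|a0].
  rewrite !add0r addr0; lra.
rewrite le_eqVlt => /orP[/eqP<- _|b0].
  rewrite !addr0 add0r (addrC c a); lra.
rewrite le_eqVlt => /orP[/eqP<-|c0].
  rewrite !addr0 add0r; lra.
have h1 := @conv_aux _ f h a b c a0 b0 c0.
have h2 := @conv_aux _ f h b a c b0 a0 c0.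
rewrite (addrC b a) in h2.
have ab : 0 < a + b by rewrite addr_gt0.
rewrite -(pmulr_rge0 _ ab).
have -> : f (c + a) = f (a + c) by rewrite addrC.
set F1 := f (a + b + c) in h1 h2 *. set F2 := f (a + b) in h1 h2 *.
set F3 := f (a + c) in h1 h2 *. set F4 := f (b + c) in h1 h2 *.
set Fa := f a in h1 h2 *. set Fb := f b in h1 h2 *. set Fc := f c in h1 h2 *. set F0 := f 0 in h1 h2 *.
have -> : (a + b) * (F1 - F2 - F4 - F3 + Fa + Fb + Fc - F0) =
  (b * (Fc - F0) - (a + b) * (F3 - Fa) + a * (F1 - F2)) +
  (a * (Fc - F0) - (a + b) * (F4 - Fb) + b * (F1 - F2)) by ring.
exact: addr_ge0.
Qed.
Lemma subadd {R : realType} (f : R -> R) : concave_nonneg f ->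
  forall x y z : R, 0 <= x -> 0 <= y -> z = x + y -> f z + f 0 <= f x + f y.
Proof.
move=> hc x y z x0 y0 ->.
have [s0|sn] := eqVneq (x + y) 0.
  have x00 : x = 0 by lra.
  have y00 : y = 0 by lra.
  by rewrite x00 y00 addr0.
have sp : 0 < x + y by rewrite lt_def sn addr_ge0.
set t := x / (x + y).
have t0 : 0 <= t by rewrite divr_ge0 // ltW.
have t1 : t <= 1 by rewrite ler_pdivrMr // mul1r lerDl.
have h1 := hc (x + y) 0 t ltac:(lra) (lexx 0) t0 t1.
have h2 := hc (x + y) 0 (1 - t) ltac:(lra) (lexx 0) ltac:(lra) ltac:(lra).
have ex : t * (x + y) + (1 - t) * 0 = x by rewrite mulr0 addr0 /t mulfVK.
have ey : (1 - t) * (x + y) + (1 - (1 - t)) * 0 = y.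
  by rewrite mulr0 addr0 mulrBl mul1r /t mulfVK //; ring.
rewrite ex in h1; rewrite ey in h2.
have ee : 1 - (1 - t) = t by ring.
rewrite ee in h2.
nra.
Qed.

Definition Sx {R : realType} (f : R -> R) (a b c : R) :=
  f `|a| + f `|b| + f `|c| + f `|a + b + c| - f `|a + b| - f `|b + c| - f `|c + a| - f 0.

Lemma Sx_pos {R : realType} (f : R -> R) : three_convex_nonneg f ->
  forall a b c : R, 0 <= a -> 0 <= b -> 0 <= c -> 0 <= Sx f a b c.
Proof.
move=> h a b c a0 b0 c0; have := @Dpos _ f h a b c a0 b0 c0; rewrite /Sx.
have n1 : `|a + b + c| = a + b + c by apply: ger0_norm; lra.
have n2 : `|a + b| = a + b by apply: ger0_norm; lra.
have n3 : `|b + c| = b + c by apply: ger0_norm; lra.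
have n4 : `|c + a| = c + a by apply: ger0_norm; lra.
rewrite n1 n2 n3 n4 (ger0_norm a0) (ger0_norm b0) (ger0_norm c0); lra.
Qed.

Lemma Sx_mix {R : realType} (f : R -> R) : three_convex_nonneg f ->
  nondecreasing_nonneg f -> concave_nonneg f ->
  forall a b c : R, 0 <= a -> 0 <= b -> c <= 0 -> 0 <= Sx f a b c.
Proof.
move=> h hm hc a b c a0 b0 c0; rewrite /Sx.
rewrite (ger0_norm a0) (ger0_norm b0) (ler0_norm c0) (ger0_norm (addr_ge0 a0 b0)).
have [big|small] := lerP (a + b) (- c).
  have e0 : 0 <= - (a + b + c) by lra.
  have := @Dpos _ f h a b _ a0 b0 e0.
  rewrite (ler0_norm (x := a + b + c)); last by lra.
  rewrite (ler0_norm (x := b + c)); last by lra.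
  rewrite (ler0_norm (x := c + a)); last by lra.
  have -> : a + b + - (a + b + c) = - c by ring.
  have -> : b + - (a + b + c) = - (c + a) by ring.
  have -> : - (a + b + c) + a = - (b + c) by ring.
  lra.
rewrite (ger0_norm (x := a + b + c)); last by lra.
have [ca|ca] := lerP 0 (c + a); have [bc|bc] := lerP 0 (b + c).
- rewrite (ger0_norm ca) (ger0_norm bc).
  have := @subadd _ f hc (a + b + c) (- c) (a + b) ltac:(lra) ltac:(lra) ltac:(ring).
  have := hm (c + a) a ca ltac:(lra).
  have := hm (b + c) b bc ltac:(lra).
  lra.
- rewrite (ger0_norm ca) (ltr0_norm bc).
  have := @subadd _ f hc a b (a + b) a0 b0 erefl.
  have := hm (- (b + c)) (- c) ltac:(lra) ltac:(lra).
  have := hm (c + a) (a + b + c) ca ltac:(lra).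
  lra.
- rewrite (ltr0_norm ca) (ger0_norm bc).
  have := @subadd _ f hc a b (a + b) a0 b0 erefl.
  have := hm (- (c + a)) (- c) ltac:(lra) ltac:(lra).
  have := hm (b + c) (a + b + c) bc ltac:(lra).
  lra.
- rewrite (ltr0_norm ca) (ltr0_norm bc).
  have := @subadd _ f hc (- c) (a + b + c) (a + b) ltac:(lra) ltac:(lra) ltac:(ring).
  have := hm (- (c + a)) b ltac:(lra) ltac:(lra).
  have := hm (- (b + c)) a ltac:(lra) ltac:(lra).
  lra.
Qed.
Lemma Sx_p12 {R : realType} (f : R -> R) a b c : Sx f a b c = Sx f b a c.
Proof.
rewrite /Sx (addrC b a) (addrC a c) (addrC c b); lra.
Qed.

Lemma Sx_p23 {R : realType} (f : R -> R) a b c : Sx f a b c = Sx f a c b.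
Proof.
rewrite /Sx -(addrA a c b) (addrC c b) (addrA a b c) (addrC a c) (addrC b a); lra.
Qed.

Lemma Sx_neg {R : realType} (f : R -> R) a b c : Sx f (- a) (- b) (- c) = Sx f a b c.
Proof.
by rewrite /Sx -!opprD !normrN.
Qed.

Lemma Sx_ge0 {R : realType} (f : R -> R) : three_convex_nonneg f ->
  nondecreasing_nonneg f -> concave_nonneg f ->
  forall a b c : R, 0 <= Sx f a b c.
Proof.
move=> h hm hc.
have key : forall a b c : R, 0 <= a -> 0 <= b -> 0 <= Sx f a b c.
  move=> a b c a0 b0; have [c0|c0] := lerP 0 c.
    exact: Sx_pos.
  by apply: Sx_mix => //; apply: ltW.
have key2 : forall a b c : R, 0 <= a -> 0 <= Sx f a b c.
  move=> a b c a0; have [b0|b0] := lerP 0 b; first exact: key.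
  have [c0|c0] := lerP 0 c; first by rewrite Sx_p23; apply: key.
  rewrite -Sx_neg Sx_p12 Sx_p23; apply: Sx_mix => //; lra.
move=> a b c; have [a0|a0] := lerP 0 a; first exact: key2.
have [b0|b0] := lerP 0 b; first by rewrite Sx_p12; apply: key2.
have [c0|c0] := lerP 0 c.
  rewrite -Sx_neg; apply: Sx_mix => //; lra.
rewrite -Sx_neg; apply: Sx_pos => //; lra.
Qed.
Lemma diag_commute {R : realType} n (f : R -> R) (W : 'M[R]_n) (d e : 'rV[R]_n) :
  diag_mx e *m W = W *m diag_mx d ->
  diag_mx (map_mx f e) *m W = W *m diag_mx (map_mx f d).
Proof.
rewrite !mul_diag_mx !mul_mx_diag => /matrixP H; apply/matrixP => i j.
have := H i j; rewrite !mxE => Hij.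
have [->|nz] := eqVneq (W i j) 0; first by rewrite mulr0 mul0r.
have : e 0 i = d 0 j by apply: (mulIf nz); rewrite Hij mulrC.
by move=> ->; rewrite mulrC.
Qed.

Lemma mxfun_eq {R : realType} n (f : R -> R) (M U : 'M[R]_n) (d : 'rV[R]_n) :
  U *m U^T = 1%:M -> M = U *m diag_mx d *m U^T ->
  mxfun f M = U *m diag_mx (map_mx f d) *m U^T.
Proof.
move=> UU HM; rewrite /mxfun.
case: xgetP => [[V e] /= _ [VV HM'] | Hn]; last first.
  by exfalso; apply: (Hn (U, d)); split.
have VV' := mulmx1C VV; have UU' := mulmx1C UU.
have [W defW] : {W | W = V^T *m U} by exists (V^T *m U).
have HW : diag_mx e *m W = W *m diag_mx d.
  have : V^T *m M *m U = diag_mx e *m W.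
    by rewrite HM' defW !mulmxA VV' mul1mx.
  rewrite {1}HM => <-.
  by rewrite defW !mulmxA -mulmxA UU' mulmx1.
have HW' := @diag_commute _ _ f _ _ _ HW.
have WW : W *m W^T = 1%:M.
  by rewrite defW trmx_mul trmxK !mulmxA -(mulmxA _ U) UU mulmx1 VV'.
have E : V *m diag_mx (map_mx f e) *m V^T =
    V *m (diag_mx (map_mx f e) *m W) *m W^T *m V^T.
  by rewrite -!mulmxA (mulmxA W) WW mul1mx.
rewrite E HW' defW trmx_mul trmxK.
by rewrite !mulmxA VV mul1mx -mulmxA VV mulmx1.
Qed.
Lemma Re_sum {R : realType} m (F : 'I_m -> R[i]) : complex.Re (\sum_(k < m) F k) = \sum_(k < m) complex.Re (F k).
Proof.
apply: (big_morph (@complex.Re R)) => // [[a b] [c d]] //.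
Qed.
Lemma Im_sum {R : realType} m (F : 'I_m -> R[i]) : complex.Im (\sum_(k < m) F k) = \sum_(k < m) complex.Im (F k).
Proof.
apply: (big_morph (@complex.Im R)) => // [[a b] [c d]] //.
Qed.
Lemma Re_mulR {R : realType} (a : R[i]) (b : R) : complex.Re (a * real_complex R b) = complex.Re a * b.
Proof. by case: a => a1 a2 /=; rewrite mulr0 subr0. Qed.
Lemma Im_mulR {R : realType} (a : R[i]) (b : R) : complex.Im (a * real_complex R b) = complex.Im a * b.
Proof. by case: a => a1 a2 /=; rewrite mulr0 add0r. Qed.
Lemma Re_mul {R : realType} (a b : R[i]) : complex.Re (a * b) = complex.Re a * complex.Re b - complex.Im a * complex.Im b.
Proof. by case: a => a1 a2; case: b => b1 b2. Qed.
Lemma Im_mul {R : realType} (a b : R[i]) : complex.Im (a * b) = complex.Re a * complex.Im b + complex.Im a * complex.Re b.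
Proof. by case: a => a1 a2; case: b => b1 b2. Qed.
Lemma dot_self_pos {R : realType} n (v : 'rV[R[i]]_n) : v != 0 ->
  0 < (map_mx (@complex.Re R) v *m (map_mx (@complex.Re R) v)^T) 0 0
    + (map_mx (@complex.Im R) v *m (map_mx (@complex.Im R) v)^T) 0 0.
Proof.
move=> v0.
have [k vk] : exists k, v 0 k != 0.
  move: v0; apply: contraNP => H; apply/eqP/rowP => k; rewrite mxE.
  apply/eqP/negPn/negP => nk; apply: H; by exists k.
rewrite !mxE -big_split /=.
under eq_bigr => j _ do rewrite !mxE -!expr2.
rewrite (bigD1 k) //=.
have pos : 0 < complex.Re (v 0 k) ^+ 2 + complex.Im (v 0 k) ^+ 2.
  move: vk; case: (v 0 k) => a b /= ab.
  have [a0|a0] := eqVneq a 0.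
    have b0 : b != 0 by apply: contraNneq ab => ->; rewrite a0.
    by rewrite a0 expr0n /= add0r lt_def sqrf_eq0 b0 sqr_ge0.
  by rewrite ltr_pwDl ?sqr_ge0 // lt_def sqrf_eq0 a0 sqr_ge0.
have : 0 <= \sum_(i < n | i != k) (complex.Re (v 0 i) ^+ 2 + complex.Im (v 0 i) ^+ 2).
  by apply: sumr_ge0 => i _; rewrite addr_ge0 // sqr_ge0.
lra.
Qed.
Lemma real_common_eig {R : realType} n (As : seq 'M[R]_n.+1) :
  {in As, forall M, M^T = M} -> {in As &, forall M N, M *m N = N *m M} ->
  exists2 w : 'rV[R]_n.+1, w != 0 & {in As, forall M, exists r, w *m M = r *: w}.
Proof.
move=> Hs Hc.
have Hcc : {in map (map_mx (real_complex R)) As &, forall A B, comm_mx A B}.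
  move=> A B /mapP[M MA ->] /mapP[N NA ->]; rewrite /comm_mx -!map_mxM Hc //.
have [v v0 /allP Hv] := @common_eigenvector _ n.+1 _ (ltn0Sn n) Hcc.
pose x := map_mx (@complex.Re R) v; pose y := map_mx (@complex.Im R) v.
have pos := @dot_self_pos _ _ v v0; rewrite -/x -/y in pos.
have key : forall M, M \in As -> exists r, x *m M = r *: x /\ y *m M = r *: y.
  move=> M MA.
  have /sub_rVP [mu Hmu] := Hv _ (map_f _ MA).
  have Ex : x *m M = complex.Re mu *: x - complex.Im mu *: y.
    apply/rowP => j; rewrite !mxE.
    have := congr1 (fun Z : 'rV_n.+1 => complex.Re (Z 0 j)) Hmu.
    rewrite /= !mxE Re_sum Re_mul => <-.
    by apply: eq_bigr => k _; rewrite !mxE Re_mulR.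
  have Ey : y *m M = complex.Re mu *: y + complex.Im mu *: x.
    apply/rowP => j; rewrite !mxE.
    have := congr1 (fun Z : 'rV_n.+1 => complex.Im (Z 0 j)) Hmu.
    rewrite /= !mxE Im_sum Im_mul => <-.
    by apply: eq_bigr => k _; rewrite !mxE Im_mulR.
  set r := complex.Re mu in Ex Ey *; set s := complex.Im mu in Ex Ey *.
  have P1 : x *m M *m y^T = r *: (x *m y^T) - s *: (y *m y^T).
    by rewrite Ex mulmxBl !scalemxAl.
  have P2 : (x *m M *m y^T)^T = r *: (y *m x^T) + s *: (x *m x^T).
    by rewrite !trmx_mul trmxK (Hs M MA) mulmxA Ey mulmxDl !scalemxAl.
  have T : (y *m x^T) 0 0 = (x *m y^T) 0 0.
    by rewrite -[y *m x^T]trmxK trmx_mul trmxK mxE.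
  have E0 : ((x *m M *m y^T)^T) 0 0 = (x *m M *m y^T) 0 0 by rewrite mxE.
  rewrite P2 P1 in E0.
  move: E0 T pos; move: (x *m x^T) (y *m y^T) (x *m y^T) (y *m x^T) => X Y Pxy Pyx E0 T pos'.
  rewrite !mxE T in E0.
  have s0 : s = 0.
    have : s * (X 0 0 + Y 0 0) = 0 by rewrite mulrDr; lra.
    by move/eqP; rewrite mulf_eq0 (gt_eqF pos') orbF => /eqP.
  exists r; split.
    by rewrite Ex s0 scale0r subr0.
  by rewrite Ey s0 scale0r addr0.
have [x0|xn0] := eqVneq x 0.
  exists y.
    apply: contraTneq pos => y0; rewrite x0 y0 !mul0mx mxE addr0 ltxx //.
  by move=> M MA; have [r [_ H]] := key M MA; exists r.
exists x => // M MA; have [r [H _]] := key M MA; by exists r.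
Qed.
Lemma dot_eq0 {R : realType} n (u : 'cV[R]_n) : (u^T *m u) 0 0 = 0 -> u = 0.
Proof.
rewrite mxE => /eqP; rewrite psumr_eq0 => [/allP H|i _]; last first.
  by rewrite mxE -expr2 sqr_ge0.
apply/matrixP => i j; rewrite (ord1 j) !mxE.
have := H i (mem_index_enum _); rewrite mxE -expr2 sqrf_eq0 => /eqP //.
Qed.

Lemma mxsubE {R : realType} m n (A B : 'M[R]_(m, n)) i j : (A - B) i j = A i j - B i j.
Proof. by rewrite !mxE. Qed.
Lemma mxaddE {R : realType} m n (A B : 'M[R]_(m, n)) i j : (A + B) i j = A i j + B i j.
Proof. by rewrite !mxE. Qed.
Lemma mxscaleE {R : realType} m n (a : R) (A : 'M[R]_(m, n)) i j : (a *: A) i j = a * A i j.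
Proof. by rewrite !mxE. Qed.

Lemma ecol {R : realType} n (X : 'cV[R]_n.+1) :
  (X^T *m delta_mx ord0 (0 : 'I_1)) 0 0 = X ord0 0.
Proof. by rewrite -colE !mxE. Qed.

Lemma householder {R : realType} n (q : 'cV[R]_n.+1) : (q^T *m q) 0 0 = 1 ->
  exists H : 'M[R]_n.+1, H *m H^T = 1%:M /\ H *m delta_mx ord0 (0 : 'I_1) = q.
Proof.
move=> qq.
pose e : 'cV[R]_n.+1 := delta_mx ord0 (0 : 'I_1).
pose u := e - q.
pose s := (u^T *m u) 0 0.
pose k := 2 / s.
pose P := u *m u^T.
have PP : P *m P = s *: P.
  by rewrite /P mulmxA -(mulmxA u) [u^T *m u]mx11_scalar mul_mx_scalar -scalemxAl.
have kk : k * (k * s) = k + k.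
  have [s0|s0] := eqVneq s 0; first by rewrite /k s0 invr0 !mulr0 addr0.
  by rewrite /k; field.
exists (1%:M - k *: P).
have Pt : P^T = P by rewrite /P trmx_mul trmxK.
have Ht : (1%:M - k *: P)^T = 1%:M - k *: P.
  by rewrite linearB /= linearZ /= trmx1 Pt.
split.
  rewrite Ht mulmxBl mul1mx mulmxBr mulmx1 -scalemxAl -scalemxAr PP !scalerA -mulrA kk scalerDl.
  by apply/matrixP => i j; rewrite !mxE; ring.
have ee : (e^T *m e) 0 0 = 1 by rewrite ecol mxE !eqxx.
have eq1 : (e^T *m q) 0 0 = q ord0 0.
  by rewrite -[e^T *m q]trmxK trmx_mul trmxK mxE ecol.
set a := (u^T *m e) 0 0.
have ea : a = 1 - q ord0 0 by rewrite /a /u linearB /= mulmxBl mxsubE ee ecol.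
have sa : s = a + a.
  rewrite /s /u !linearB /= !mulmxBl !mxsubE.
  rewrite [(e^T *m e) 0 0]ee eq1 [(q^T *m e) 0 0]ecol qq ea.
  ring.
rewrite mulmxBl mul1mx -scalemxAl /P -mulmxA [u^T *m e]mx11_scalar mul_mx_scalar scalerA -/a.
have [a0|a0] := eqVneq a 0.
  have u0 : u = 0 by apply: dot_eq0; rewrite -/s sa a0 addr0.
  have : e - q = 0 by [].
  by rewrite a0 mulr0 scale0r subr0 => /eqP; rewrite subr_eq0 => /eqP <-.
have -> : k * a = 1 by rewrite /k sa; field; rewrite -mulr2n mulrn_eq0 a0.
by rewrite scale1r /u opprB addrC subrK.
Qed.
Lemma blk_mul {R : realType} n (a b : 'M[R]_1) (D E : 'M[R]_n) :
  block_mx a 0 0 D *m block_mx b 0 0 E = block_mx (a *m b) 0 0 (D *m E).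
Proof. by rewrite mulmx_block !mulmx0 !mul0mx !addr0 add0r. Qed.

Lemma blk_offdiag {R : realType} n (a : 'M[R]_1) (D : 'M[R]_n) :
  (forall i j, i != j -> D i j = 0) ->
  forall i j : 'I_(1 + n), i != j -> block_mx a 0 0 D i j = 0.
Proof.
move=> HD x y; rewrite -[x]splitK -[y]splitK.
case: (fintype.split x) => i'; case: (fintype.split y) => j' /= ij.
- by move: ij; rewrite (ord1 i') (ord1 j') eqxx.
- by rewrite block_mxEur mxE.
- by rewrite block_mxEdl mxE.
- rewrite block_mxEdr HD //; apply: contraNneq ij => ->; by [].
Qed.

Lemma blk_form {R : realType} n (B : 'M[R]_(1 + n)) :
  B^T = B -> dlsubmx B = 0 -> B = block_mx (ulsubmx B) 0 0 (drsubmx B).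
Proof.
move=> Bs Bd.
have Bu : ursubmx B = 0.
  by apply: trmx_inj; rewrite trmx_ursub Bs Bd trmx0.
by rewrite -{1}(submxK B) Bu Bd.
Qed.

Lemma dot_pos {R : realType} m (w : 'rV[R]_m) : w != 0 -> 0 < (w *m w^T) 0 0.
Proof.
move=> w0; rewrite lt_def; apply/andP; split.
  apply: contra w0 => /eqP H; apply/eqP; apply: trmx_inj; rewrite trmx0.
  by apply: dot_eq0; rewrite trmxK.
by rewrite mxE; apply: sumr_ge0 => i _; rewrite mxE -expr2 sqr_ge0.
Qed.
Lemma col_blk {R : realType} n (B : 'M[R]_(1 + n)) r : B^T = B ->
  B *m delta_mx ord0 (0 : 'I_1) = r *: delta_mx ord0 (0 : 'I_1) ->
  B = block_mx (ulsubmx B) 0 0 (drsubmx B).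
Proof.
move=> Bs Hr; apply: blk_form => //.
apply/matrixP => i j; rewrite !mxE (ord1 j).
have := congr1 (fun Z : 'cV_(1 + n) => Z (rshift 1 i) 0) Hr; rewrite -colE !mxE /=.
have -> : lshift n (0 : 'I_1) = ord0 by apply: val_inj.
by rewrite mulr0.
Qed.
Lemma simdiag {R : realType} n (As : seq 'M[R]_n) :
  {in As, forall M, M^T = M} -> {in As &, forall M N, M *m N = N *m M} ->
  exists U : 'M[R]_n, U *m U^T = 1%:M /\
    {in As, forall M (i j : 'I_n), i != j -> (U^T *m M *m U) i j = 0}.
Proof.
elim: n As => [|n IH] As Hs Hc.
  exists 1%:M; split; first by rewrite trmx1 mulmx1.
  by move=> M _ [].
have [w w0 Hw] := @real_common_eig _ _ _ Hs Hc.
have wpos := @dot_pos _ _ _ w0.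
pose c := (Num.sqrt ((w *m w^T) 0 0))^-1.
pose q := c *: w^T.
have qq : (q^T *m q) 0 0 = 1.
  rewrite /q !linearZ /= trmxK -scalemxAl !mxscaleE mulrA -expr2 /c exprVn.
  by rewrite sqr_sqrtr ?(ltW wpos) // mulVf // gt_eqF.
have [H [HH He]] := @householder _ _ _ qq.
have HH' := mulmx1C HH.
pose e : 'cV[R]_n.+1 := delta_mx ord0 0.
have Bcol : forall M, M \in As -> exists r, H^T *m M *m H *m e = r *: e.
  move=> M MA; have [r Hr] := Hw M MA; exists r.
  have Mq : M *m q = r *: q.
    rewrite /q -scalemxAr scalerA mulrC -scalerA; congr (_ *: _).
    by rewrite -(Hs M MA) -trmx_mul Hr linearZ.
  by rewrite -mulmxA He -mulmxA Mq -scalemxAr -He mulmxA HH' mul1mx.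
have Bs : forall M, M \in As -> (H^T *m M *m H)^T = H^T *m M *m H.
  by move=> M MA; rewrite !trmx_mul trmxK (Hs M MA) mulmxA.
have Bf : forall M, M \in As -> (H^T *m M *m H : 'M[R]_(1 + n)) =
    block_mx (ulsubmx (H^T *m M *m H : 'M[R]_(1 + n))) 0 0 (drsubmx (H^T *m M *m H : 'M[R]_(1 + n))).
  move=> M MA; have [r Hr] := Bcol M MA; exact: col_blk (Bs M MA) Hr.
have BB : forall M N, H^T *m M *m H *m (H^T *m N *m H) = H^T *m (M *m N) *m H.
  move=> M N; rewrite !mulmxA -(mulmxA _ H) HH mulmx1.
  by rewrite -(mulmxA (H^T *m M)).
pose D (M : 'M[R]_n.+1) := drsubmx (H^T *m M *m H : 'M[R]_(1 + n)).
have Ds : forall M, M \in As -> (D M)^T = D M.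
  by move=> M MA; rewrite /D trmx_drsub Bs.
have DE : forall M N, M \in As -> N \in As ->
    D M *m D N = drsubmx (H^T *m (M *m N) *m H : 'M[R]_(1 + n)).
  move=> M N MA NA; rewrite -BB /D.
  by rewrite [in RHS](Bf M MA) [in RHS](Bf N NA) blk_mul block_mxKdr.
have Dc : forall M N, M \in As -> N \in As -> D M *m D N = D N *m D M.
  by move=> M N MA NA; rewrite DE // DE // (Hc M N MA NA).
have [V [VV HV]] := IH (map D As)
  ltac:(by move=> _ /mapP[M MA ->]; apply: Ds)
  ltac:(by move=> _ _ /mapP[M MA ->] /mapP[N NA ->]; apply: Dc).
pose Blk : 'M[R]_(1 + n) := block_mx (1%:M : 'M[R]_1) 0 0 V.
have BlkT : Blk^T = block_mx (1%:M : 'M[R]_1) 0 0 V^T.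
  by rewrite /Blk tr_block_mx !trmx0 trmx1.
exists (H *m Blk); split.
  rewrite trmx_mul BlkT -mulmxA (mulmxA Blk) /Blk blk_mul.
  by rewrite mulmx1 VV -scalar_mx_block mul1mx HH.
move=> M MA i j ij.
rewrite trmx_mul BlkT -!mulmxA (mulmxA M) (mulmxA H^T) (mulmxA H^T M) (Bf M MA).
rewrite /Blk mulmxA blk_mul mul1mx blk_mul mulmx1.
apply: blk_offdiag => // i' j' ij'.
by apply: HV => //; apply: (map_f D).
Qed.
Lemma diag_repr {R : realType} n (U M : 'M[R]_n) : U *m U^T = 1%:M ->
  (forall i j, i != j -> (U^T *m M *m U) i j = 0) ->
  exists d : 'rV[R]_n, M = U *m diag_mx d *m U^T.
Proof.
move=> UU Hoff; exists (\row_i (U^T *m M *m U) i i).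
have E0 : forall X : 'M[R]_n, (forall i j, i != j -> X i j = 0) -> X = diag_mx (\row_i X i i).
  move=> X HX; apply/matrixP => i j; rewrite !mxE.
  have [<-|ij] := eqVneq i j; first by rewrite mulr1n.
  by rewrite mulr0n HX.
have E := E0 _ Hoff.
by rewrite -E !mulmxA UU mul1mx -mulmxA UU mulmx1.
Qed.

Lemma diag_mxD' {R : realType} n (a b : 'rV[R]_n) : diag_mx (a + b) = diag_mx a + diag_mx b.
Proof. by apply/matrixP => i j; rewrite !mxE mulrnDl. Qed.

Lemma udiag_add {R : realType} n (U : 'M[R]_n) (a b : 'rV[R]_n) :
  U *m diag_mx a *m U^T + U *m diag_mx b *m U^T = U *m diag_mx (a + b) *m U^T.
Proof. by rewrite diag_mxD' mulmxDr mulmxDl. Qed.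

Lemma repr_f {R : realType} n (f : R -> R) (U M : 'M[R]_n) (d : 'rV[R]_n) :
  U *m U^T = 1%:M -> M = U *m diag_mx d *m U^T ->
  mxfun f (mxabs M) = U *m diag_mx (map_mx (fun x => f `|x|) d) *m U^T.
Proof.
move=> UU HM.
have UU' := mulmx1C UU.
have MM : M *m M = U *m diag_mx (\row_i (d 0 i * d 0 i)) *m U^T.
  rewrite HM !mulmxA -(mulmxA _ U^T U) UU' mulmx1 -(mulmxA U); congr (_ *m _ *m _).
  by apply/matrixP => i j; rewrite mul_diag_mx !mxE mulrnAr.
rewrite /mxabs (@mxfun_eq _ _ _ _ _ _ UU MM) (@mxfun_eq _ _ _ _ _ _ UU erefl).
congr (_ *m diag_mx _ *m _); apply/rowP => i; rewrite !mxE -expr2 sqrtr_sqr //.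
Qed.

Lemma loewner_diag {R : realType} n (U : 'M[R]_n) (l r : 'rV[R]_n) :
  (forall i, l 0 i <= r 0 i) ->
  loewner_le (U *m diag_mx l *m U^T) (U *m diag_mx r *m U^T).
Proof.
move=> H x.
have E : forall d : 'rV[R]_n, (x^T *m (U *m diag_mx d *m U^T) *m x) 0 0 =
    \sum_k ((U^T *m x) k 0 * d 0 k) * (U^T *m x) k 0.
  move=> d; rewrite !mulmxA -(mulmxA _ U^T x) -[x^T *m U]trmxK trmx_mul trmxK.
  rewrite mxE; apply: eq_bigr => k _; rewrite mul_mx_diag !mxE; by [].
rewrite !E; apply: ler_sum => k _.
have := H k; set y := (U^T *m x) k 0; nra.
Qed.
Theorem theorem11 (R : realType) (f : R -> R)
  (hcont : {within [set x : R | 0 <= x], continuous f})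
  (h3 : three_convex_nonneg f)
  (hmono : nondecreasing_nonneg f)
  (hconc : concave_nonneg f)
  (n : nat) (A B C : 'M[R]_n)
  (hA : A^T = A) (hB : B^T = B) (hC : C^T = C)
  (hAB : A *m B = B *m A) (hBC : B *m C = C *m B) (hCA : C *m A = A *m C) :
  loewner_le
    (mxfun f (mxabs (A + B)) + mxfun f (mxabs (B + C))
       + mxfun f (mxabs (C + A)) + f 0 *: 1%:M)
    (mxfun f (mxabs A) + mxfun f (mxabs B) + mxfun f (mxabs C)
       + mxfun f (mxabs (A + B + C))).
Proof.
have Hs : {in [:: A; B; C], forall M, M^T = M}.
  by move=> M; rewrite !inE => /or3P[]/eqP->.
have Hc : {in [:: A; B; C] &, forall M N, M *m N = N *m M}.
  by move=> M N; rewrite !inE => /or3P[]/eqP-> /or3P[]/eqP->.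
have [U [UU Hoff]] := @simdiag _ _ _ Hs Hc.
have [a eA] := @diag_repr _ _ U A UU (Hoff A ltac:(by rewrite !inE eqxx)).
have [b eB] := @diag_repr _ _ U B UU (Hoff B ltac:(by rewrite !inE eqxx orbT)).
have [c eC] := @diag_repr _ _ U C UU (Hoff C ltac:(by rewrite !inE eqxx !orbT)).
have eAB : A + B = U *m diag_mx (a + b) *m U^T by rewrite -udiag_add -eA -eB.
have eBC : B + C = U *m diag_mx (b + c) *m U^T by rewrite -udiag_add -eB -eC.
have eCA : C + A = U *m diag_mx (c + a) *m U^T by rewrite -udiag_add -eC -eA.
have eABC : A + B + C = U *m diag_mx (a + b + c) *m U^T by rewrite -!udiag_add -eA -eB -eC.
have e0 : f 0 *: 1%:M = U *m diag_mx (const_mx (f 0)) *m U^T.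
  by rewrite diag_const_mx mul_mx_scalar -scalemxAl UU.
rewrite (@repr_f _ _ f _ _ _ UU eAB) (@repr_f _ _ f _ _ _ UU eBC) (@repr_f _ _ f _ _ _ UU eCA) e0.
rewrite (@repr_f _ _ f _ _ _ UU eA) (@repr_f _ _ f _ _ _ UU eB) (@repr_f _ _ f _ _ _ UU eC) (@repr_f _ _ f _ _ _ UU eABC).
rewrite !udiag_add; apply: loewner_diag => i; rewrite !mxE.
have := @Sx_ge0 _ f h3 hmono hconc (a 0 i) (b 0 i) (c 0 i); rewrite /Sx; lra.
Qed.
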